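(* Let $\Omega$ be a region of $\mathcal{C}^*_{n,A}$ and $\bm x\in\Omega$ with associated permutation $\pi$. (1) If $\bm y\in\Omega$ has associated permutation $\sigma$, then the partitions $p_\pi(\Omega)$ (computed from $\bm x$) and $p_\sigma(\Omega)$ (computed from $\bm y$) are equivalent. (2) Conversely, if $\sigma\in\mathfrak{S}_n$ admits a partition into consecutive subwords that is equivalent to $p_\pi(\Omega)$, then there exists $\bm y\in\Omega$ whose associated permutation is $\sigma$.
   Context: Let $A=\{a_1,\dots,a_m\}$ with $a_1>\dots>a_m>0$; $\mathcal{C}^*_{n,A}$ is the arrangement in $\mathbb{R}^n$ of hyperplanes $x_i-x_j=a_k$ ($i\ne j$, $1\le k\le m$), and regions are connected components of the complement. The associated permutation of $\bm x$ is the unique $\pi\in\mathfrak{S}_n$ with $x_{\pi(1)}\ge\dots\ge x_{\pi(n)}$ and $\pi^{-1}(i)<\pi^{-1}(j)$ whenever $i<j$ and $x_i=x_j$. Given $\bm x$ with associated permutation $\pi$, let $M_k$ ($1\le k\le m$) be the matrix $(\operatorname{sgn}(x_{\pi(s)}-x_{\pi(t)}-a_k))_{s,t\in[n]}$. Positions $s,t$ are equivalent if for every $k$ rows $s,t$ of $M_k$ have equally many $+$ entries and columns $s,t$ of $M_k$ have equally many $+$ entries; the classes are intervals of consecutive positions, and $p_\pi(\Omega)$ is the partition of the word $\pi(1)\cdots\pi(n)$ into the corresponding consecutive subwords (blocks). A partition of a permutation word into consecutive subwords $B_1|\cdots|B_s$ and a partition $C_1|\cdots|C_t$ of another permutation word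 are equivalent if $s=t$ and $C_j$ consists of exactly the same letters as $B_j$ for every $j$. *)

(* Defs.v *)
From HB Require Import structures.
From mathcomp Require Import all_boot all_order all_algebra all_fingroup.
From mathcomp Require Import all_classical all_reals all_analysis.
Set Implicit Arguments. Unset Strict Implicit. Unset Printing Implicit Defensive.
Import Order.TTheory GRing.Theory Num.Theory.
Import numFieldTopology.Exports numFieldNormedType.Exports.
Local Open Scope ring_scope.
Local Open Scope classical_set_scope.

Section Defs.
Variables (R : realType) (n : nat).

Definition arr_compl (A : seq R) : set 'rV[R]_n :=
  [set x | forall i j : 'I_n, i != j -> forall a, a \in A -> x ord0 i - x ord0 j != a].

Definition is_region (A : seq R) (Om : set 'rV[R]_n) : Prop :=
  exists2 x0, arr_compl A x0 & Om = connected_component (arr_compl A) x0.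

(* associated permutation: x_{pi(1)} >= ... >= x_{pi(n)}, ties ordered by index *)
Definition assoc_perm (x : 'rV[R]_n) (p : 'S_n) : Prop :=
  (forall s t : 'I_n, (s < t)%N -> x ord0 (p t) <= x ord0 (p s)) /\
  (forall i j : 'I_n, (i < j)%N -> x ord0 i = x ord0 j ->
     ((p^-1)%g i < (p^-1)%g j)%N).

Definition Mmat (x : 'rV[R]_n) (p : 'S_n) (a : R) : 'M[R]_n :=
  \matrix_(s, t) Num.sg (x ord0 (p s) - x ord0 (p t) - a).

Definition row_plus (M : 'M[R]_n) (s : 'I_n) : nat := #|[set t | M s t == 1]|.
Definition col_plus (M : 'M[R]_n) (t : 'I_n) : nat := #|[set s | M s t == 1]|.

Definition pos_equiv (A : seq R) (x : 'rV[R]_n) (p : 'S_n) (s t : 'I_n) : bool :=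
  all (fun a => (row_plus (Mmat x p a) s == row_plus (Mmat x p a) t) &&
                (col_plus (Mmat x p a) s == col_plus (Mmat x p a) t)) A.

(* a new block starts at position t iff t > 0 and t-1, t are not equivalent
   (the classes are intervals of consecutive positions) *)
Definition block_start (A : seq R) (x : 'rV[R]_n) (p : 'S_n) (t : 'I_n) : bool :=
  (0 < t)%N && ~~ [exists u : 'I_n, (u.+1 == t :> nat) && pos_equiv A x p u t].

(* index (from 0) of the block containing position s *)
Definition block_idx (A : seq R) (x : 'rV[R]_n) (p : 'S_n) (s : 'I_n) : nat :=
  #|[set t : 'I_n | block_start A x p t & (t <= s)%N]|.

Definition nblocks (A : seq R) (x : 'rV[R]_n) (p : 'S_n) : nat :=
  (\max_(s : 'I_n) (block_idx A x p s).+1)%N.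

Definition perm_word (p : 'S_n) : seq 'I_n := [seq p s | s <- enum 'I_n].

Definition region_part (A : seq R) (x : 'rV[R]_n) (p : 'S_n) : seq (seq 'I_n) :=
  [seq [seq p s | s <- enum 'I_n & block_idx A x p s == j]
  | j <- iota 0 (nblocks A x p)].

End Defs.

Definition is_consec_partition (n : nat) (w : seq 'I_n) (bs : seq (seq 'I_n)) : Prop :=
  flatten bs = w /\ all (fun b => b != [::]) bs.

Definition part_equiv (n : nat) (bs cs : seq (seq 'I_n)) : Prop :=
  size bs = size cs /\ forall j, (j < size bs)%N -> nth [::] bs j =i nth [::] cs j.

(* Main.v *)
Require Import Defs.
From HB Require Import structures.
From mathcomp Require Import all_boot all_order all_algebra all_fingroup.
From mathcomp Require Import all_classical all_reals all_analysis.
From mathcomp Require Import ring lra.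
Import Order.TTheory GRing.Theory Num.Theory.
Import numFieldTopology.Exports numFieldNormedType.Exports.
Local Open Scope ring_scope.
Set Implicit Arguments. Unset Strict Implicit.

Lemma card_lt_ord (n k : nat) : (k <= n)%N -> #|[set t : 'I_n | (t < k)%N]| = k.
Proof.
move=> hk.
have -> : [set t : 'I_n | (t < k)%N] = [set widen_ord hk j | j in 'I_k].
  apply/setP => t; rewrite !inE; apply/idP/imsetP.
    by move=> htk; exists (Ordinal htk) => //; apply: val_inj.
  by case=> j _ ->; rewrite /= ltn_ord.
rewrite card_imset ?card_ord //.
by move=> a b /(congr1 val) /= /val_inj.
Qed.

Lemma card_perm_lt (n k : nat) (p : 'S_n) : (k <= n)%N ->
  #|[set m : 'I_n | ((p^-1)%g m < k)%N]| = k.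
Proof.
move=> hk.
transitivity #|(p^-1)%g @^-1: [set t : 'I_n | (t < k)%N]|.
  by apply: eq_card => m; rewrite !inE.
by rewrite card_preimset ?card_lt_ord //; exact: perm_inj.
Qed.

Section Abs.
Variable (n : nat) (Dr : rel 'I_n).

Definition Dset (i : 'I_n) := [set m | Dr m i].
Definition Uset (i : 'I_n) := [set m | Dr m i && ~~ Dr i m].

Lemma Pos (p : 'S_n) (hmono : forall s t : 'I_n, (s <= t)%N -> Dr (p s) (p t))
  (s : 'I_n) : (#|Uset (p s)| <= s)%N && (s < #|Dset (p s)|)%N.
Proof.
apply/andP; split.
  apply: (@leq_trans #|[set m | ((p^-1)%g m < s)%N]|); last first.
    by rewrite card_perm_lt // ltnW.
  apply: subset_leq_card.
  apply/fintype.subsetP => m; rewrite !inE => /andP[_ hn].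
  rewrite ltnNge; apply/negP => hle; move: (hmono _ _ hle).
  by rewrite permKV (negbTE hn).
apply: (@leq_trans #|[set m | ((p^-1)%g m < s.+1)%N]|).
  by rewrite card_perm_lt.
apply: subset_leq_card.
apply/fintype.subsetP => m; rewrite !inE ltnS => hle.
by move: (hmono _ _ hle); rewrite permKV.
Qed.

Hypothesis htot : forall i k, Dr i k || Dr k i.
Hypothesis htr : transitive Dr.

Lemma DsubU i k : Dr i k -> ~~ Dr k i -> Dset i \subset Uset k.
Proof.
move=> hik hki; apply/fintype.subsetP => m; rewrite !inE => hmi.
rewrite (htr hmi hik) /=; apply/negP => hkm.
by move: hki; rewrite (htr hkm hmi).
Qed.

Lemma key1 (p q : 'S_n) (hp : forall s t : 'I_n, (s <= t)%N -> Dr (p s) (p t))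
  (hq : forall s t : 'I_n, (s <= t)%N -> Dr (q s) (q t)) (s : 'I_n) :
  Dr (p s) (q s) && Dr (q s) (p s).
Proof.
have /andP[hp1 hp2] := Pos hp s; have /andP[hq1 hq2] := Pos hq s.
case: (boolP (Dr (p s) (q s))) => h1; case: (boolP (Dr (q s) (p s))) => h2 //.
- have := subset_leq_card (DsubU h1 h2).
  by move=> h; have := leq_trans h hq1; rewrite leqNgt hp2.
- have := subset_leq_card (DsubU h2 h1).
  by move=> h; have := leq_trans h hp1; rewrite leqNgt hq2.
- by move: (htot (p s) (q s)); rewrite (negbTE h1) (negbTE h2).
Qed.
End Abs.

Lemma mem_cset (T : Type) (b : T -> bool) (x : T) :
  (x \in in_set [set y | b y]%classic) = b x.
Proof. by rewrite /in_mem /= /in_set asboolb. Qed.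

Section Conc.
Variables (R : realType) (n : nat) (A : seq R).
Implicit Types (z : 'rV[R]_n) (p : 'S_n).

Definition posr (z : 'rV[R]_n) (a : R) (i k : 'I_n) : bool := 0 < z ord0 i - z ord0 k - a.
Definition rp z a i := #|[set j | posr z a i j]|.
Definition cp z a i := #|[set j | posr z a j i]|.
Definition Eqv z i k := all (fun a => (rp z a i == rp z a k) && (cp z a i == cp z a k)) A.
Definition Dm z i k := all (fun a => (rp z a k <= rp z a i)%N && (cp z a i <= cp z a k)%N) A.

Lemma row_plusE z (p : 'S_n) a s : row_plus (Mmat z p a) s = rp z a (p s).
Proof.
rewrite /row_plus /rp.
transitivity #|p @^-1: [set j | posr z a (p s) j]|.
  by apply: eq_card => t; rewrite mem_cset !inE mxE sgr_cp0.
by rewrite card_preimset //; exact: perm_inj.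
Qed.

Lemma col_plusE z (p : 'S_n) a t : col_plus (Mmat z p a) t = cp z a (p t).
Proof.
rewrite /col_plus /cp.
transitivity #|p @^-1: [set j | posr z a j (p t)]|.
  by apply: eq_card => s; rewrite mem_cset !inE mxE sgr_cp0.
by rewrite card_preimset //; exact: perm_inj.
Qed.

Lemma pos_equivE z p s t : pos_equiv A z p s t = Eqv z (p s) (p t).
Proof. by apply: eq_all => a; rewrite !row_plusE !col_plusE. Qed.

Lemma EqvE z i k : Eqv z i k = Dm z i k && Dm z k i.
Proof.
rewrite /Eqv /Dm -all_predI; apply: eq_all => a /=; rewrite !eqn_leq.
by case: (rp z a i <= rp z a k)%N; case: (rp z a k <= rp z a i)%N;
   case: (cp z a i <= cp z a k)%N; case: (cp z a k <= cp z a i)%N.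
Qed.

Lemma Dm_refl z i : Dm z i i.
Proof. by apply/allP => a _; rewrite !leqnn. Qed.

Lemma Dm_trans z : transitive (Dm z).
Proof.
move=> j i k /allP h1 /allP h2; apply/allP => a ha.
move/andP: (h1 a ha) => [h11 h12]; move/andP: (h2 a ha) => [h21 h22].
by rewrite (leq_trans h21 h11) (leq_trans h12 h22).
Qed.

Lemma Dm_ge z i k : z ord0 k <= z ord0 i -> Dm z i k.
Proof.
move=> hle; apply/allP => a _; apply/andP; split; apply: subset_leq_card;
  apply/fintype.subsetP => j; rewrite !inE /posr => h; lra.
Qed.

Lemma Dm_tot z i k : Dm z i k || Dm z k i.
Proof.
case: (lerP (z ord0 k) (z ord0 i)) => h; first by rewrite Dm_ge.
by rewrite (Dm_ge (ltW h)) orbT.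
Qed.

Lemma Eqv_refl z i : Eqv z i i.
Proof. by rewrite EqvE Dm_refl. Qed.

Lemma Eqv_sym z i k : Eqv z i k = Eqv z k i.
Proof. by rewrite !EqvE andbC. Qed.

Lemma Eqv_trans z : transitive (Eqv z).
Proof.
move=> j i k; rewrite !EqvE => /andP[h1 h2] /andP[h3 h4].
by rewrite (Dm_trans h1 h3) (Dm_trans h4 h2).
Qed.

Lemma Eqv_congr z i i' k k' : Eqv z i i' -> Eqv z k k' -> Eqv z i k = Eqv z i' k'.
Proof.
move=> hi hk; apply/idP/idP => h.
  by apply: (Eqv_trans _ hk); apply: (Eqv_trans _ h); rewrite Eqv_sym.
by apply: (Eqv_trans hi); apply: (Eqv_trans h); rewrite Eqv_sym.
Qed.

Definition sortedp (z : 'rV[R]_n) (p : 'S_n) :=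
  forall s t : 'I_n, (s < t)%N -> z ord0 (p t) <= z ord0 (p s).

Lemma mono_of z p : sortedp z p -> forall s t : 'I_n, (s <= t)%N -> Dm z (p s) (p t).
Proof.
move=> hs s t; rewrite leq_eqVlt => /orP[/eqP/val_inj -> | h]; first exact: Dm_refl.
by apply: Dm_ge; apply: hs.
Qed.

Lemma bstartE z p t : block_start A z p t =
  (0 < t)%N && ~~ [exists u : 'I_n, (u.+1 == t :> nat) && Eqv z (p u) (p t)].
Proof.
rewrite /block_start; congr (_ && ~~ _); apply: eq_existsb => u.
by rewrite pos_equivE.
Qed.

Lemma bidx_eq z p (hs : sortedp z p) (s s' : 'I_n) : (s <= s')%N ->
  Eqv z (p s) (p s') -> block_idx A z p s = block_idx A z p s'.
Proof.
move=> hle hE; rewrite /block_idx; apply: eq_card => t; rewrite !inE.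
case hst: (block_start A z p t) => //=.
case: (leqP t s) => hts; first by rewrite (leq_trans hts).
apply/esym/negbTE/negP => hts'.
move: hst; rewrite bstartE => /andP[ht0 /existsPn H].
have hu : (t.-1 < n)%N by rewrite (leq_ltn_trans (leq_pred t)).
move: (H (Ordinal hu)); rewrite /= prednK // eqxx /= EqvE.
have hm := mono_of hs.
rewrite hm /=; last by rewrite leq_pred.
move: hE; rewrite EqvE => /andP[_ h2].
move/negP; apply; apply: (Dm_trans (hm t s' hts')); apply: (Dm_trans h2).
by apply: hm => /=; rewrite -ltnS prednK.
Qed.

Lemma bidx_lt z p (hs : sortedp z p) (s s' : 'I_n) : (s < s')%N ->
  ~~ Eqv z (p s) (p s') -> (block_idx A z p s < block_idx A z p s')%N.
Proof.
move=> hlt hnE.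
case: (boolP [exists t : 'I_n, [&& (s < t)%N, (t <= s')%N & block_start A z p t]]).
  case/existsP => t /and3P[h1 h2 h3].
  apply: proper_card; apply/fintype.properP; split.
    apply/fintype.subsetP => u; rewrite !inE => /andP[-> hu] /=.
    exact: (leq_trans hu (ltnW hlt)).
  by exists t; rewrite !inE h3 ?h2 //= -ltnNge.
move/existsPn => H; exfalso; move/negP: hnE; apply.
suff: forall d (t : 'I_n), (s <= t <= s')%N -> (t - s)%N = d -> Eqv z (p s) (p t).
  by move=> /(_ (s' - s)%N s'); rewrite (ltnW hlt) leqnn; apply.
elim=> [|d IH] t /andP[h1 h2] hd.
  have -> : t = s by apply: val_inj; apply/eqP; rewrite eqn_leq h1 -subn_eq0 hd.
  exact: Eqv_refl.
have hst : (s < t)%N by rewrite -subn_gt0 hd.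
move: (H t); rewrite hst h2 /= bstartE (leq_ltn_trans (leq0n s) hst) /= negbK.
case/existsP => u /andP[/eqP hut hE].
have hsu : (s <= u)%N by rewrite -ltnS hut.
have hus : (u - s)%N = d by move: hd; rewrite -hut subSn //; case.
apply: (Eqv_trans _ hE); apply: (IH u) => //.
by rewrite hsu /= (leq_trans _ h2) // -hut.
Qed.


Lemma memblk p (f : 'I_n -> nat) j i :
  (i \in [seq p s | s <- enum 'I_n & f s == j]) = (f ((p^-1)%g i) == j).
Proof.
apply/mapP/idP => [[s] | h].
  by rewrite mem_filter mem_enum andbT => /eqP <- ->; rewrite permK.
by exists ((p^-1)%g i); rewrite ?permKV // mem_filter mem_enum h.
Qed.

Lemma region_nth z p j : (j < nblocks A z p)%N ->
  nth [::] (region_part A z p) j = [seq p s | s <- enum 'I_n & block_idx A z p s == j].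
Proof. by move=> hj; rewrite /region_part (nth_map 0%N) ?size_iota // nth_iota. Qed.

Lemma part1 x y pi sigma (hx : sortedp x pi) (hy : sortedp y sigma)
  (hD : forall i k, Dm y i k = Dm x i k) :
  part_equiv (region_part A x pi) (region_part A y sigma).
Proof.
have hmx := mono_of hx.
have hmy : forall s t : 'I_n, (s <= t)%N -> Dm x (sigma s) (sigma t).
  by move=> s t h; rewrite -hD; apply: mono_of.
have hE : forall s, Eqv x (pi s) (sigma s).
  by move=> s; rewrite EqvE; apply: (key1 (@Dm_tot x) (@Dm_trans x) hmx hmy).
have hEy : forall i k, Eqv y i k = Eqv x i k by move=> i k; rewrite !EqvE !hD.
have hbs : forall t, block_start A x pi t = block_start A y sigma t.
  move=> t; rewrite !bstartE; congr (_ && ~~ _); apply: eq_existsb => u.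
  by rewrite hEy (Eqv_congr (hE u) (hE t)).
have hb : forall s, block_idx A x pi s = block_idx A y sigma s.
  by move=> s; rewrite /block_idx; apply: eq_card => t; rewrite !inE hbs.
have hn : nblocks A x pi = nblocks A y sigma.
  by rewrite /nblocks; apply: eq_bigr => s _; rewrite hb.
split; first by rewrite /region_part !size_map !size_iota hn.
move=> j; rewrite /region_part size_map size_iota => hj.
rewrite -/(region_part A x pi) -/(region_part A y sigma) region_nth // region_nth -?hn // => i.
rewrite !memblk -hb.
set s1 := (pi^-1)%g i; set s2 := (sigma^-1)%g i.
have h12 : Eqv x (pi s1) (pi s2).
  by rewrite /s1 permKV Eqv_sym; move: (hE s2); rewrite /s2 permKV.
case: (leqP s1 s2) => h; first by rewrite (bidx_eq hx h h12).
by rewrite (bidx_eq hx (ltnW h)) // Eqv_sym.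
Qed.

End Conc.

Lemma flat_same (T : eqType) (x0 : T) (bs cs : seq (seq T)) s :
  size bs = size cs -> (forall j, (j < size bs)%N -> nth [::] bs j =i nth [::] cs j) ->
  uniq (flatten bs) -> uniq (flatten cs) -> (s < size (flatten bs))%N ->
  exists j, (nth x0 (flatten bs) s \in nth [::] bs j) &&
            (nth x0 (flatten cs) s \in nth [::] bs j).
Proof.
elim: bs cs s => [|b bs IH] [|c cs] s //= [hsz] heq.
rewrite !cat_uniq => /and3P[ub _ ubs] /and3P[uc _ ucs] hs.
have hbc : b =i c by apply: (heq 0%N).
have hsize : size b = size c by apply: perm_size; apply: uniq_perm.
rewrite !nth_cat -hsize.
case: ifP => hsb.
  by exists 0%N => /=; rewrite mem_nth //= hbc mem_nth // -hsize.
have [|j hj] := IH cs (s - size b)%N hsz (fun j hj => heq j.+1 hj) ubs ucs.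
  by rewrite size_cat in hs; rewrite ltn_subLR ?hs // leqNgt hsb.
by exists j.+1.
Qed.

Lemma filter_split (T : eqType) (f : T -> nat) m l :
  sorted (fun a b => (f a <= f b)%N) l -> all (fun a => (m <= f a)%N) l ->
  l = [seq a <- l | f a == m] ++ [seq a <- l | f a != m].
Proof.
elim: l => [|a l IH] //= hs /andP[ha hl].
have hsl := path_sorted hs.
case: eqP => [ham | hne] /=; first by rewrite -IH.
have hgt : (m < f a)%N by rewrite ltn_neqAle ha andbT eq_sym; apply/eqP.
have hall : all (fun b => (f a <= f b)%N) l.
  by apply: (order_path_min _ hs) => x y z; exact: leq_trans.
have hb : forall b, b \in l -> (m < f b)%N.
  by move=> b hb; exact: (leq_trans hgt (allP hall b hb)).
rewrite (@eq_in_filter _ _ pred0 l); last first.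
  by move=> b hbl; apply/negbTE; rewrite neq_ltn (hb b hbl) orbT.
rewrite filter_pred0 /=; congr (_ :: _); apply/esym/all_filterP.
by apply/allP => b hbl; rewrite neq_ltn (hb b hbl) orbT.
Qed.

Lemma flatten_filter (T : eqType) (f : T -> nat) k m l :
  sorted (fun a b => (f a <= f b)%N) l -> all (fun a => (m <= f a < m + k)%N) l ->
  flatten [seq [seq a <- l | f a == j] | j <- iota m k] = l.
Proof.
elim: k m l => [|k IH] m l hs hall /=.
  case: l hall hs => //= a l /andP[/andP[h1 h2]] _ _.
  by rewrite addn0 ltnNge h1 in h2.
have hge : all (fun a => (m <= f a)%N) l.
  by apply/allP => a ha; move/allP: hall => /(_ a ha) /andP[].
rewrite {3}(filter_split hs hge); congr (_ ++ _).
rewrite -[in RHS](IH m.+1 [seq a <- l | f a != m]).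
- congr flatten; apply/eq_in_map => j; rewrite mem_iota => /andP[hj _].
  rewrite -filter_predI; apply: eq_filter => a /=.
  by case: eqP => // ->; rewrite neq_ltn hj orbT.
- by apply: sorted_filter => // x y z; exact: leq_trans.
apply/allP => a; rewrite mem_filter => /andP[hne ha].
move/allP: hall => /(_ a ha) /andP[h1 h2].
by rewrite addSnnS h2 andbT ltn_neqAle h1 andbT eq_sym hne.
Qed.

Lemma enum_sorted (n : nat) : sorted (fun a b : 'I_n => (a <= b)%N) (enum 'I_n).
Proof.
have := iota_sorted 0 n; rewrite -val_enum_ord sorted_map.
by apply: sub_sorted.
Qed.

Section Conc2.
Variables (R : realType) (n : nat) (A : seq R).
Implicit Types (x y z : 'rV[R]_n) (p pi sigma : 'S_n).

Lemma part2comb x pi sigma cs (hx : sortedp x pi) :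
  is_consec_partition (perm_word sigma) cs -> part_equiv (region_part A x pi) cs ->
  forall s, Eqv A x (pi s) (sigma s).
Proof.
move=> [hflat _] [hsz heq] s.
set beta := block_idx A x pi.
have hmono : forall s t : 'I_n, (s <= t)%N -> (beta s <= beta t)%N.
  move=> s' t hst; apply: subset_leq_card; apply/fintype.subsetP => u.
  by rewrite !inE => /andP[-> h] /=; exact: leq_trans h hst.
have hlt : forall s, (beta s < nblocks A x pi)%N.
  by move=> s'; rewrite /nblocks; exact: (@leq_bigmax _ (fun s => (beta s).+1) s').
have hfl : flatten (region_part A x pi) = perm_word pi.
  rewrite /region_part /perm_word.
  rewrite (_ : [seq _ | j <- _] = map (map pi) [seq [seq s <- enum 'I_n | beta s == j]
             | j <- iota 0 (nblocks A x pi)]); last by rewrite -map_comp.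
  rewrite -map_flatten flatten_filter //.
    by apply: sub_sorted (enum_sorted n) => a b; exact: hmono.
  by apply/allP => a _; rewrite hlt.
have uf : uniq (flatten cs).
  by rewrite hflat /perm_word map_inj_uniq ?enum_uniq //; exact: perm_inj.
have ub : uniq (flatten (region_part A x pi)).
  by rewrite hfl /perm_word map_inj_uniq ?enum_uniq //; exact: perm_inj.
have hs : (s < size (flatten (region_part A x pi)))%N.
  by rewrite hfl size_map size_enum_ord.
have [j /andP[h1 h2]] := flat_same s hsz heq ub uf hs.
rewrite hfl hflat /perm_word !(nth_map s) in h1 h2; try (by rewrite size_enum_ord); try (by rewrite -enumT size_enum_ord); try (by rewrite -cardE card_ord); try (by rewrite -enumT -cardE card_ord).
rewrite -!enumT !nth_ord_enum in h1 h2.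
case: (ltnP j (nblocks A x pi)) => hj; last first.
  by move: h1; rewrite nth_default // /region_part size_map size_iota.
rewrite region_nth // !memblk permK in h1 h2.
set s' := (pi^-1)%g (sigma s) in h2.
have -> : sigma s = pi s' by rewrite /s' permKV.
have hbe : beta s = beta s' by rewrite /beta (eqP h1) (eqP h2).
case: (ltngtP s s') => h.
- apply: contraT => hn; have := bidx_lt hx h hn.
  by rewrite -/beta hbe ltnn.
- apply: contraT => hn; rewrite Eqv_sym in hn; have := bidx_lt hx h hn.
  by rewrite -/beta hbe ltnn.
- have -> : s' = s by apply: val_inj.
  exact: Eqv_refl.
Qed.
End Conc2.

Section Anal.
Variables (R : realType) (n : nat) (A : seq R).
Implicit Types (x y z : 'rV[R]_n) (p pi sigma : 'S_n).
Local Open Scope classical_set_scope.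

Lemma fcont (i k : 'I_n) (a : R) :
  continuous (fun z : 'rV[R]_n => z ord0 i - z ord0 k - a).
Proof.
move=> z.
apply: (@continuousB _ _ _ (fun z : 'rV[R]_n => z ord0 i - z ord0 k) (fun=> a)).
  apply: (@continuousB _ _ _ (fun z : 'rV[R]_n => z ord0 i) (fun z => z ord0 k));
  exact: coord_continuous.
exact: cst_continuous.
Qed.

Lemma same_pos x0 x y :
  connected_component (arr_compl A) x0 x -> connected_component (arr_compl A) x0 y ->
  forall a i k, a \in A -> posr x a i k = posr y a i k.
Proof.
move=> hx hy a i k ha.
case: (eqVneq i k) => [-> | hik]; first by rewrite /posr !subrr.
set Om := connected_component (arr_compl A) x0.
set f := fun z : 'rV[R]_n => z ord0 i - z ord0 k - a.
have hne : forall w, Om w -> f w != 0.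
  move=> w /connected_component_sub hw; rewrite /f subr_eq0; exact: hw.
have hc : connected (f @` Om).
  apply: connected_continuous_connected; first exact: component_connected.
  exact/continuous_subspaceT/fcont.
have /connected_intervalP hI := hc.
have key : forall u v, Om u -> Om v -> 0 < f u -> 0 < f v.
  move=> u v hu hv hfu; rewrite ltNge; apply/negP => hfv.
  have : (f @` Om) 0.
    by apply: (hI (f v) (f u)); [exists v | exists u | rewrite hfv ltW].
  by case=> w hw hw0; move: (hne w hw); rewrite hw0 eqxx.
by apply/idP/idP; apply: key.
Qed.

Lemma seg_in x0 x y : connected_component (arr_compl A) x0 x -> arr_compl A x ->
  arr_compl A y -> (forall a i k, a \in A -> posr x a i k = posr y a i k) ->
  connected_component (arr_compl A) x0 y.
Proof.
move=> hx0x hxc hyc hpos.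
set g := fun l : R => x + l *: (y - x).
have gcont : continuous g.
  move=> l; apply: (@continuousD _ _ _ (fun=> x) (fun l : R => l *: (y - x))).
    exact: cst_continuous.
  apply: (@continuousZr_tmp _ _ _ (fun l : R => l)); exact: cvg_id.
set S := g @` `[0%R, 1%R].
have Sc : connected S.
  apply: connected_continuous_connected; first exact: segment_connected.
  exact: continuous_subspaceT.
have hxS : S x.
  by exists 0; [rewrite /= in_itv /= lexx ler01 | rewrite /g scale0r addr0].
have hyS : S y.
  by exists 1; [rewrite /= in_itv /= lexx ler01 | rewrite /g scale1r addrC subrK].
have hSsub : S `<=` arr_compl A.
  move=> _ [l hl <-] i j hij a ha.
  move: hl; rewrite /= in_itv /= => /andP[hl0 hl1].
  have hxa := hxc i j hij a ha; have hya := hyc i j hij a ha.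
  have := hpos a i j ha; rewrite /posr.
  rewrite /g !mxE.
  set dx := x ord0 i - x ord0 j - a; set dy := y ord0 i - y ord0 j - a.
  have hdx : dx != 0 by rewrite /dx subr_eq0.
  have hdy : dy != 0 by rewrite /dy subr_eq0.
  move=> heq; rewrite -subr_eq0.
  have -> : x ord0 i + l * (y ord0 i - x ord0 i) - (x ord0 j + l * (y ord0 j - x ord0 j)) - a
            = (1 - l) * dx + l * dy by rewrite /dx /dy; ring.
  case: (ltrgtP 0 dx) => hx'.
  - have hy' : 0 < dy by rewrite -heq.
    by apply/lt0r_neq0; nra.
  - have hy' : dy < 0 by rewrite lt_neqAle hdy /= leNgt -heq -leNgt ltW.
    by apply/ltr0_neq0; nra.
  - by move: hdx; rewrite -hx' eqxx.
apply: (connected_component_trans hx0x).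
exact: (connected_component_max hxS hSsub Sc).
Qed.

Lemma lb_exists (T : finType) (f : T -> R) :
  (forall t, 0 < f t) -> exists2 e, 0 < e & forall t, e <= f t.
Proof.
move=> hf.
suff: forall l : seq T, exists2 e, 0 < e & forall t, t \in l -> e <= f t.
  by move=> /(_ (enum T)) [e he1 he2]; exists e => // t; apply: he2; rewrite mem_enum.
elim => [|t l [e he1 he2]]; first by exists 1.
case: (lerP e (f t)) => h.
  by exists e => // u; rewrite inE => /orP[/eqP -> | /he2].
exists (f t) => // u; rewrite inE => /orP[/eqP -> // | /he2 hu].
exact: le_trans (ltW h) hu.
Qed.

End Anal.

Section Build.
Variables (R : realType) (n : nat) (A : seq R).
Implicit Types (x y z : 'rV[R]_n) (p pi sigma : 'S_n).

Lemma swap_pos x a i i' : x ord0 i' <= x ord0 i -> rp x a i = rp x a i' ->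
  cp x a i = cp x a i' ->
  forall k, posr x a i k = posr x a i' k /\ posr x a k i = posr x a k i'.
Proof.
move=> hle hr hc k; split.
  have hs : [set j | posr x a i' j] \subset [set j | posr x a i j].
    by apply/fintype.subsetP => j; rewrite !inE /posr => h; lra.
  have := (subset_cardP (esym hr) hs) k; rewrite !inE => ->. by [].
have hs : [set j | posr x a j i] \subset [set j | posr x a j i'].
  by apply/fintype.subsetP => j; rewrite !inE /posr => h; lra.
by have := (subset_cardP hc hs) k; rewrite !inE => ->.
Qed.

Lemma Eqv_pos x i i' : Eqv A x i i' -> forall a k, a \in A ->
  posr x a i k = posr x a i' k /\ posr x a k i = posr x a k i'.
Proof.
move=> /allP hE a k ha; move/andP: (hE a ha) => [/eqP hr /eqP hc].
case: (lerP (x ord0 i') (x ord0 i)) => h; first exact: swap_pos.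
have [h1 h2] := swap_pos (ltW h) (esym hr) (esym hc) k.
by split.
Qed.

Lemma Eqv_pos2 x i i' k k' a : a \in A -> Eqv A x i i' -> Eqv A x k k' ->
  posr x a i k = posr x a i' k'.
Proof.
move=> ha hi hk; have [-> _] := Eqv_pos hi k ha.
by have [_ ->] := Eqv_pos hk i' ha.
Qed.

Lemma sign_keep (d q e : R) : `|q| < e -> e <= `|d| -> (0 < d + q) = (0 < d) /\ d + q != 0.
Proof.
rewrite ltr_norml ler_normr => /andP[h1 h2] /orP[h|h].
  have hd : 0 < d by lra.
  split; last by apply/lt0r_neq0; lra.
  by apply/idP/idP => _; lra.
have hd : d < 0 by lra.
split; last by apply/ltr0_neq0; lra.
by apply/idP/idP => h'; lra.
Qed.

Lemma build_y x pi sigma : all (fun a => 0 < a) A -> arr_compl A x -> assoc_perm x pi ->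
  (forall s, Eqv A x (pi s) (sigma s)) ->
  exists y, [/\ arr_compl A y, (forall a i k, a \in A -> posr x a i k = posr y a i k)
             & assoc_perm y sigma].
Proof.
move=> hA hxc [hs _] hE.
have hpos : forall t : 'I_n * 'I_n * 'I_(size A),
    0 < `|x ord0 t.1.1 - x ord0 t.1.2 - nth 0 A t.2|.
  case=> [[i k] j] /=; rewrite normr_gt0.
  have hj := mem_nth 0 (ltn_ord j).
  case: (eqVneq i k) => [-> | hik].
    by rewrite subrr sub0r oppr_eq0; apply: lt0r_neq0; exact: (allP hA _ hj).
  by rewrite subr_eq0; exact: hxc i k hik _ hj.
have [e he0 he] := lb_exists hpos.
set eps := e / (n%:R + 1).
have hn1 : 0 < n%:R + 1 :> R by have := ler0n R n; lra.
have heps : 0 < eps by rewrite /eps divr_gt0.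
have hepsn : eps * (n%:R + 1) = e by rewrite /eps divfK // lt0r_neq0.
set y := \row_i (x ord0 (pi ((sigma^-1)%g i)) - eps * ((sigma^-1)%g i)%:R) : 'rV[R]_n.
have hy : forall i, y ord0 i = x ord0 (pi ((sigma^-1)%g i)) - eps * ((sigma^-1)%g i)%:R.
  by move=> i; rewrite /y mxE.
have hdiff : forall a i k, a \in A ->
    `|eps * (((sigma^-1)%g k)%:R - ((sigma^-1)%g i)%:R)| < e /\
    e <= `|x ord0 (pi ((sigma^-1)%g i)) - x ord0 (pi ((sigma^-1)%g k)) - a|.
  move=> a i k ha; split.
    rewrite normrM gtr0_norm //.
    have hu' : ((sigma^-1)%g i)%:R <= n%:R :> R by rewrite ler_nat ltnW.
    have hv' : ((sigma^-1)%g k)%:R <= n%:R :> R by rewrite ler_nat ltnW.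
    have hu0 : 0 <= ((sigma^-1)%g i)%:R :> R := ler0n _ _.
    have hv0 : 0 <= ((sigma^-1)%g k)%:R :> R := ler0n _ _.
    have hw : `|((sigma^-1)%g k)%:R - ((sigma^-1)%g i)%:R| <= n%:R :> R.
      by rewrite ler_norml; apply/andP; split; lra.
    rewrite -hepsn; apply: (le_lt_trans (ler_wpM2l (ltW heps) hw)).
    by rewrite ltr_pM2l //; lra.
  have hia : (index a A < size A)%N by rewrite index_mem.
  by have := he (pi ((sigma^-1)%g i), pi ((sigma^-1)%g k), Ordinal hia); rewrite /= nth_index.
have hpp : forall a i k, a \in A ->
    posr x a (pi ((sigma^-1)%g i)) (pi ((sigma^-1)%g k)) = posr x a i k.
  move=> a i k ha; rewrite (Eqv_pos2 ha (hE ((sigma^-1)%g i)) (hE ((sigma^-1)%g k))).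
  by rewrite !permKV.
have hyk : forall a i k, y ord0 i - y ord0 k - a =
    (x ord0 (pi ((sigma^-1)%g i)) - x ord0 (pi ((sigma^-1)%g k)) - a)
    + eps * (((sigma^-1)%g k)%:R - ((sigma^-1)%g i)%:R).
  by move=> a i k; rewrite !hy; ring.
exists y; split.
- move=> i k hik a ha; have [h1 h2] := hdiff a i k ha.
  have [_ hnz] := sign_keep h1 h2.
  by rewrite -subr_eq0 hyk.
- move=> a i k ha; have [h1 h2] := hdiff a i k ha.
  have [hs' _] := sign_keep h1 h2.
  by rewrite -hpp // [posr y a i k]/posr hyk hs'.
split.
- move=> s t hst; rewrite !hy !permK.
  have h2 := hs s t hst.
  have h1 : s%:R <= t%:R :> R by rewrite ler_nat ltnW.
  have := ler_wpM2l (ltW heps) h1; lra.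
move=> i j hij hyij.
case: (ltngtP ((sigma^-1)%g i) ((sigma^-1)%g j)) => // h.
- exfalso; have h2 := hs _ _ h.
  have h1 : ((sigma^-1)%g j)%:R < ((sigma^-1)%g i)%:R :> R by rewrite ltr_nat.
  have h3 : eps * ((sigma^-1)%g j)%:R < eps * ((sigma^-1)%g i)%:R by rewrite ltr_pM2l.
  by move: hyij; rewrite !hy; lra.
- have hij' : i = j by apply: (@perm_inj _ (sigma^-1)%g); apply: val_inj.
  by move: hij; rewrite hij' ltnn.
Qed.

End Build.

Unset Implicit Arguments.
Local Open Scope classical_set_scope.

Theorem lemma2p5 (R : realType) (n : nat) (A : seq R)
  (hA : sorted (fun a b : R => b < a) A) (hApos : all (fun a : R => 0 < a) A)
  (Om : set 'rV[R]_n) (hOm : is_region A Om)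
  (x : 'rV[R]_n) (hx : Om x) (pi : 'S_n) (hpi : assoc_perm x pi) :
  (forall (y : 'rV[R]_n) (sigma : 'S_n), Om y -> assoc_perm y sigma ->
     part_equiv (region_part A x pi) (region_part A y sigma)) /\
  (forall (sigma : 'S_n) (cs : seq (seq 'I_n)),
     is_consec_partition (perm_word sigma) cs ->
     part_equiv (region_part A x pi) cs ->
     exists2 y, Om y & assoc_perm y sigma).
Proof.
case: hOm => x0 hx0 hOmE; subst Om.
have hxc : arr_compl A x := connected_component_sub hx.
have hsx : sortedp x pi := hpi.1.
split.
- move=> y sigma hy hys; apply: part1 => //; first exact: hys.1.
  move=> i k; rewrite /Dm; apply: eq_in_all => a ha /=.
  have hp : forall i k, posr x a i k = posr y a i k.
    by move=> i1 k1; exact: same_pos hx hy _ _ _ ha.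
  have hr : forall j, rp y a j = rp x a j.
    by move=> j; apply: eq_card => l; rewrite !inE hp.
  have hc : forall j, cp y a j = cp x a j.
    by move=> j; apply: eq_card => l; rewrite !inE hp.
  by rewrite !hr !hc.
- move=> sigma cs hcs hpe.
  have hE := part2comb hsx hcs hpe.
  have [y [hyc hpos hys]] := build_y hApos hxc hpi hE.
  exists y; last exact: hys.
  exact: seg_in hx hxc hyc hpos.
Qed.
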